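(* Let $f\in\mathcal{H}^2_{\omega}$ with $\|f\|=1$. Then the following are equivalent: (a) $f$ is $\mathcal{H}^2_{\omega}$-inner; (b) there exist a closed $z$-invariant subspace $\mathcal{M}\neq\{0\}$ of $\mathcal{H}^2_{\omega}$ and an integer $d\geq 0$ such that $z^k\in\mathcal{M}^{\perp}$ for all $0\leq k\leq d-1$, $z^d\notin\mathcal{M}^{\perp}$, and $f$ is a constant multiple of $P_{\mathcal{M}}(z^d)$, the orthogonal projection of $z^d$ onto $\mathcal{M}$.
   Context: Let $\omega=\{\omega_n\}_{n\geq 0}$ be a sequence of positive reals with $\omega_0=1$ and $\lim_{n\to\infty}\omega_{n+1}/\omega_n=1$. $\mathcal{H}^2_{\omega}$ is the Hilbert space of power series $f(z)=\sum_{n\ge0}a_nz^n$ with $\|f\|^2=\sum_{n\geq0}\omega_n|a_n|^2<\infty$ and inner product $\langle f,g\rangle=\sum_n\omega_na_n\overline{b_n}$ for $g=\sum b_nz^n$; its elements are holomorphic on the unit disk $\mathbb{D}$. A closed subspace $\mathcal{M}$ is $z$-invariant if $z\mathcal{M}\subset\mathcal{M}$. A function $f\in\mathcal{H}^2_{\omega}$ is $\mathcal{H}^2_{\omega}$-inner if $\|f\|=1$ and $\langle z^mf,f\rangle=0$ for all integers $m\geq1$. *)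

(* Defs.v *)
From Stdlib Require Import Reals Lra ClassicalEpsilon.
Open Scope R_scope.

(** Complex numbers as pairs (real part, imaginary part). *)
Definition Cx : Type := (R * R)%type.
Definition C0 : Cx := (0, 0).
Definition C1 : Cx := (1, 0).
Definition Cadd (a b : Cx) : Cx := (fst a + fst b, snd a + snd b).
Definition Csub (a b : Cx) : Cx := (fst a - fst b, snd a - snd b).
Definition Cmul (a b : Cx) : Cx :=
  (fst a * fst b - snd a * snd b, fst a * snd b + snd a * fst b).
Definition Cconj (a : Cx) : Cx := (fst a, - snd a).
Definition Cmod2 (a : Cx) : R := fst a * fst a + snd a * snd a.

(** Sum of a real series (the value is meaningful when the series converges). *)
Definition Rsum (u : nat -> R) : R :=
  epsilon (inhabits 0) (fun l => infinite_sum u l).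

(** A formal power series is represented by its coefficient sequence. *)
Definition series := nat -> Cx.

Definition weight (w : nat -> R) : Prop :=
  w 0%nat = 1 /\ (forall n, 0 < w n) /\ Un_cv (fun n => w (S n) / w n) 1.

Definition inH (w : nat -> R) (f : series) : Prop :=
  exists l, infinite_sum (fun n => w n * Cmod2 (f n)) l.

Definition norm2 (w : nat -> R) (f : series) : R :=
  Rsum (fun n => w n * Cmod2 (f n)).
Definition hnorm (w : nat -> R) (f : series) : R := sqrt (norm2 w f).
Definition inner (w : nat -> R) (f g : series) : Cx :=
  (Rsum (fun n => w n * fst (Cmul (f n) (Cconj (g n)))),
   Rsum (fun n => w n * snd (Cmul (f n) (Cconj (g n))))).

Definition szero : series := fun _ => C0.
Definition sadd (f g : series) : series := fun n => Cadd (f n) (g n).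
Definition ssub (f g : series) : series := fun n => Csub (f n) (g n).
Definition sscale (c : Cx) (f : series) : series := fun n => Cmul c (f n).

Definition zmul (f : series) : series :=
  fun n => match n with O => C0 | S k => f k end.
Definition zpow (m : nat) (f : series) : series := Nat.iter m zmul f.
Definition mono (k : nat) : series := fun n => if Nat.eqb n k then C1 else C0.

Definition is_inner (w : nat -> R) (f : series) : Prop :=
  inH w f /\ hnorm w f = 1 /\
  forall m : nat, (1 <= m)%nat -> inner w (zpow m f) f = C0.

Definition closed_subspace (w : nat -> R) (M : series -> Prop) : Prop :=
  (forall f, M f -> inH w f) /\
  M szero /\
  (forall f g, M f -> M g -> M (sadd f g)) /\
  (forall c f, M f -> M (sscale c f)) /\
  (forall f, inH w f ->
     (forall eps, 0 < eps -> exists g, M g /\ hnorm w (ssub f g) < eps) -> M f).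

Definition z_invariant (M : series -> Prop) : Prop :=
  forall f, M f -> M (zmul f).

Definition in_perp (w : nat -> R) (M : series -> Prop) (f : series) : Prop :=
  inH w f /\ forall g, M g -> inner w f g = C0.

Definition is_orth_proj (w : nat -> R) (M : series -> Prop) (x p : series) : Prop :=
  M p /\ forall g, M g -> inner w (ssub x p) g = C0.

(* Main.v *)
Require Import Defs.
From Stdlib Require Import Reals Lra Lia Psatz ClassicalEpsilon Classical FunctionalExtensionality.
From Coquelicot Require Import Coquelicot.
Open Scope R_scope.

Lemma Rsum_inf u l : infinite_sum u l -> Rsum u = l.
Proof.
  intros H. unfold Rsum.
  assert (E : exists l, infinite_sum u l) by (exists l; auto).
  pose proof (epsilon_spec (inhabits 0) _ E) as H2.
  eapply uniqueness_sum; eauto.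
Qed.

Lemma Rsum_S u : ex_series u -> Rsum u = Series u.
Proof.
  intros [l H]. rewrite (is_series_unique _ _ H). apply Rsum_inf.
  apply is_series_Reals; auto.
Qed.

Lemma sum_single u k : (forall n, n <> k -> u n = 0) ->
  forall n, sum_f_R0 u n = if Nat.ltb n k then 0 else u k.
Proof.
  intros H n. induction n as [|n IH]; simpl.
  - destruct (Nat.ltb_spec 0 k). apply H; lia. replace k with 0%nat by lia; auto.
  - rewrite IH. destruct (Nat.ltb_spec n k), (Nat.ltb_spec (S n) k).
    + rewrite H by lia; ring.
    + replace k with (S n) by lia; ring.
    + lia.
    + rewrite (H (S n)) by lia; ring.
Qed.

Lemma inf_single u k : (forall n, n <> k -> u n = 0) -> infinite_sum u (u k).
Proof.
  intros H eps Heps. exists k. intros n Hn. rewrite (sum_single u k H n).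
  destruct (Nat.ltb_spec n k). lia. unfold R_dist. rewrite Rminus_diag, Rabs_R0; auto.
Qed.

Lemma Rsum_single u k : (forall n, n <> k -> u n = 0) -> Rsum u = u k.
Proof. intros; apply Rsum_inf, inf_single; auto. Qed.

Lemma Rsum_zero u : (forall n, u n = 0) -> Rsum u = 0.
Proof. intros H. rewrite (Rsum_single u 0). auto. intros; auto. Qed.

Lemma Series_lin u v a b : ex_series u -> ex_series v ->
  Series (fun n => a * u n + b * v n) = a * Series u + b * Series v.
Proof.
  intros Hu Hv.
  rewrite (Series_plus (fun n => a * u n) (fun n => b * v n)).
  rewrite !Series_scal_l; auto.
  apply (ex_series_scal_l a u Hu). apply (ex_series_scal_l b v Hv).
Qed.

Lemma ex_lin u v a b : ex_series u -> ex_series v -> ex_series (fun n => a * u n + b * v n).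
Proof.
  intros Hu Hv. apply (ex_series_plus (fun n => a * u n) (fun n => b * v n)).
  apply (ex_series_scal_l a u Hu). apply (ex_series_scal_l b v Hv).
Qed.

Lemma Cmod2_ge0 a : 0 <= Cmod2 a.
Proof. unfold Cmod2; nra. Qed.

Lemma re_bound a b t : 0 < t ->
  Rabs (fst (Cmul a (Cconj b))) <= (t * Cmod2 a + Cmod2 b / t) / 2.
Proof.
  intros Ht. destruct a as [a1 a2], b as [b1 b2]. unfold Cmul, Cconj, Cmod2; simpl.
  replace (a1 * b1 - a2 * - b2) with (a1*b1+a2*b2) by ring.
  assert (H1: 2*t*Rabs (a1*b1+a2*b2) <= t*t*(a1 * a1 + a2 * a2) + (b1 * b1 + b2 * b2)).
  { pose proof (Rle_0_sqr (t*a1-b1)); pose proof (Rle_0_sqr (t*a2-b2));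
    pose proof (Rle_0_sqr (t*a1+b1)); pose proof (Rle_0_sqr (t*a2+b2)); unfold Rsqr in *.
    unfold Rabs; destruct Rcase_abs; nra. }
  replace ((t * (a1 * a1 + a2 * a2) + (b1 * b1 + b2 * b2) / t) / 2) with
    ((t*t*(a1 * a1 + a2 * a2) + (b1 * b1 + b2 * b2)) / (2*t)) by (field; lra).
  apply Rle_div_r. lra. lra.
Qed.

Lemma im_bound a b t : 0 < t ->
  Rabs (snd (Cmul a (Cconj b))) <= (t * Cmod2 a + Cmod2 b / t) / 2.
Proof.
  intros Ht. destruct a as [a1 a2], b as [b1 b2].
  pose proof (re_bound (a1,a2) (-b2, b1) t Ht) as H.
  unfold Cmul, Cconj, Cmod2 in *; simpl in *.
  replace (a1 * - b2 + a2 * b1) with (a1 * - b2 - a2 * - b1) by ring.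
  replace (b1 * b1 + b2 * b2) with (- b2 * - b2 + b1 * b1) by ring. exact H.
Qed.

Section Hil.
Variable w : nat -> R.
Hypothesis wpos : forall n, 0 < w n.

Definition ret f g n := w n * fst (Cmul (f n) (Cconj (g n))).
Definition imt f g n := w n * snd (Cmul (f n) (Cconj (g n))).
Definition nt f n := w n * Cmod2 (f n).

Lemma inH_ex f : inH w f <-> ex_series (nt f).
Proof. unfold inH, ex_series, nt; split; intros [l H]; exists l; apply is_series_Reals; auto. Qed.

Lemma norm2_eq f : inH w f -> norm2 w f = Series (nt f).
Proof. intros H. apply inH_ex in H. unfold norm2. rewrite Rsum_S; auto. Qed.

Lemma nt_ge0 f n : 0 <= nt f n.
Proof. unfold nt. pose proof (wpos n); pose proof (Cmod2_ge0 (f n)); nra. Qed.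

Lemma norm2_ge0 f : inH w f -> 0 <= norm2 w f.
Proof.
  intros H. rewrite norm2_eq; auto. apply inH_ex in H.
  pose proof (Series_le (fun _ => 0) (nt f)) as L.
  rewrite (Series_ext (fun _ => 0) (fun n => 0 * nt f n)) in L by (intros; ring).
  rewrite Series_scal_l in L. rewrite Rmult_0_l in L. apply L; auto.
  intros n; split; [lra| apply nt_ge0].
Qed.

Lemma abs_wt n x b : Rabs x <= b -> Rabs (w n * x) <= w n * b.
Proof. intros. rewrite Rabs_mult, (Rabs_pos_eq (w n)) by (left; auto).
  apply Rmult_le_compat_l; auto. left; auto. Qed.

Lemma ex_dom f g (t : R) u : 0 < t -> inH w f -> inH w g ->
  (forall n, Rabs (u n) <= w n * ((t * Cmod2 (f n) + Cmod2 (g n) / t) / 2)) ->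
  ex_series u /\ ex_series (fun n => Rabs (u n)) /\
  Rabs (Series u) <= (t * Series (nt f) + Series (nt g) / t) / 2.
Proof.
  intros Ht Hf Hg Hb. apply inH_ex in Hf; apply inH_ex in Hg.
  assert (EB : ex_series (fun n => (t/2) * nt f n + (/(2*t)) * nt g n)) by (apply ex_lin; auto).
  assert (Hb' : forall n, Rabs (u n) <= (t/2) * nt f n + (/(2*t)) * nt g n).
  { intros n. eapply Rle_trans. apply Hb. unfold nt. right; field; lra. }
  assert (EA : ex_series (fun n => Rabs (u n))).
  { apply (ex_series_le (fun n => Rabs (u n)) (fun n => (t/2) * nt f n + (/(2*t)) * nt g n)); auto. intros n. change (norm (Rabs (u n))) with (Rabs (Rabs (u n))).
    rewrite Rabs_Rabsolu. auto. }
  split; [apply ex_series_Rabs; auto| split; auto].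
  eapply Rle_trans. apply Series_Rabs; auto.
  eapply Rle_trans. apply Series_le; [|exact EB]. intros n; split; [apply Rabs_pos| auto].
  rewrite Series_lin; auto. right; field; lra.
Qed.

Lemma ex_re f g : inH w f -> inH w g -> ex_series (ret f g).
Proof.
  intros Hf Hg. apply (ex_dom f g 1); try lra; auto. intros n. apply abs_wt. apply re_bound; lra.
Qed.

Lemma ex_im f g : inH w f -> inH w g -> ex_series (imt f g).
Proof.
  intros Hf Hg. apply (ex_dom f g 1); try lra; auto. intros n. apply abs_wt. apply im_bound; lra.
Qed.

Lemma inner_eq f g : inH w f -> inH w g ->
  inner w f g = (Series (ret f g), Series (imt f g)).
Proof.
  intros Hf Hg. unfold inner. rewrite !Rsum_S; [reflexivity| apply ex_im; auto | apply ex_re; auto].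
Qed.

Lemma inner_bound a Y t : 0 < t -> inH w a -> inH w Y ->
  Rabs (fst (inner w a Y)) <= (t * norm2 w a + norm2 w Y / t) / 2 /\
  Rabs (snd (inner w a Y)) <= (t * norm2 w a + norm2 w Y / t) / 2.
Proof.
  intros Ht Ha HY. rewrite inner_eq, !norm2_eq; auto; simpl. split.
  - apply (ex_dom a Y t); auto. intros n. apply abs_wt. apply re_bound; lra.
  - apply (ex_dom a Y t); auto. intros n. apply abs_wt. apply im_bound; lra.
Qed.

Lemma inH_add f g : inH w f -> inH w g -> inH w (sadd f g).
Proof.
  intros Hf Hg. apply inH_ex in Hf; apply inH_ex in Hg. apply inH_ex.
  apply (@ex_series_le _ R_CompleteNormedModule _ (fun n => 2 * nt f n + 2 * nt g n)); [|apply ex_lin; auto].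
  intros n. change (norm (nt (sadd f g) n)) with (Rabs (nt (sadd f g) n)).
  rewrite Rabs_pos_eq by apply nt_ge0. unfold nt, sadd, Cadd, Cmod2; simpl.
  pose proof (wpos n). destruct (f n) as [a1 a2], (g n) as [b1 b2]; simpl.
  assert (0 <= w n * ((a1-b1)^2 + (a2-b2)^2)) by (apply Rmult_le_pos; [lra | pose proof (pow2_ge_0 (a1-b1)); pose proof (pow2_ge_0 (a2-b2)); pose proof (pow2_ge_0 (a1+b1)); pose proof (pow2_ge_0 (a2+b2)); lra]). nra.
Qed.

Lemma inH_sub f g : inH w f -> inH w g -> inH w (ssub f g).
Proof.
  intros Hf Hg. apply inH_ex in Hf; apply inH_ex in Hg. apply inH_ex.
  apply (@ex_series_le _ R_CompleteNormedModule _ (fun n => 2 * nt f n + 2 * nt g n)); [|apply ex_lin; auto].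
  intros n. change (norm (nt (ssub f g) n)) with (Rabs (nt (ssub f g) n)).
  rewrite Rabs_pos_eq by apply nt_ge0. unfold nt, ssub, Csub, Cmod2; simpl.
  pose proof (wpos n). destruct (f n) as [a1 a2], (g n) as [b1 b2]; simpl.
  assert (0 <= w n * ((a1+b1)^2 + (a2+b2)^2)) by (apply Rmult_le_pos; [lra | pose proof (pow2_ge_0 (a1-b1)); pose proof (pow2_ge_0 (a2-b2)); pose proof (pow2_ge_0 (a1+b1)); pose proof (pow2_ge_0 (a2+b2)); lra]). nra.
Qed.

Lemma inH_scale c f : inH w f -> inH w (sscale c f).
Proof.
  intros Hf. apply inH_ex in Hf. apply inH_ex.
  apply (ex_series_ext (fun n => Cmod2 c * nt f n)).
  - intros n. unfold nt, sscale, Cmul, Cmod2. destruct c, (f n); simpl; ring.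
  - apply (ex_series_scal_l (Cmod2 c) (nt f)); auto.
Qed.

Lemma inH_single f k : (forall n, n <> k -> f n = C0) -> inH w f.
Proof.
  intros H. exists (w k * Cmod2 (f k)).
  apply (inf_single (fun n => w n * Cmod2 (f n))). intros n Hn. rewrite H by auto.
  unfold Cmod2, C0; simpl; ring.
Qed.

Lemma inH_zero : inH w szero.
Proof. apply (inH_single _ 0). intros; reflexivity. Qed.

Lemma inH_mono k : inH w (mono k).
Proof. apply (inH_single _ k). intros n Hn. unfold mono.
  destruct (Nat.eqb_spec n k); [lia|reflexivity]. Qed.

End Hil.

Section Lin.
Variable w : nat -> R.
Hypothesis wpos : forall n, 0 < w n.

Ltac cx := intros; repeat match goal with |- context [?f ?n] =>
   match type of (f n) with Cx => let a := fresh "a" in let b := fresh "b" in destruct (f n) as [a b] end end.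

Lemma inner_sub_l a b X : inH w a -> inH w b -> inH w X ->
  inner w (ssub a b) X = Csub (inner w a X) (inner w b X).
Proof.
  intros Ha Hb HX. rewrite !inner_eq; auto using inH_sub. unfold Csub; simpl. f_equal.
  - rewrite <- Series_minus by (apply ex_re; auto). apply Series_ext; intros n.
    unfold ret, ssub, Csub, Cmul, Cconj. destruct (a n), (b n), (X n); simpl; ring.
  - rewrite <- Series_minus by (apply ex_im; auto). apply Series_ext; intros n.
    unfold imt, ssub, Csub, Cmul, Cconj. destruct (a n), (b n), (X n); simpl; ring.
Qed.

Lemma inner_sub_r a X Y : inH w a -> inH w X -> inH w Y ->
  inner w a (ssub X Y) = Csub (inner w a X) (inner w a Y).
Proof.
  intros Ha HX HY. rewrite !inner_eq; auto using inH_sub. unfold Csub; simpl. f_equal.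
  - rewrite <- Series_minus by (apply ex_re; auto). apply Series_ext; intros n.
    unfold ret, ssub, Csub, Cmul, Cconj. destruct (a n), (Y n), (X n); simpl; ring.
  - rewrite <- Series_minus by (apply ex_im; auto). apply Series_ext; intros n.
    unfold imt, ssub, Csub, Cmul, Cconj. destruct (a n), (Y n), (X n); simpl; ring.
Qed.

Lemma inner_add_r a X Y : inH w a -> inH w X -> inH w Y ->
  inner w a (sadd X Y) = Cadd (inner w a X) (inner w a Y).
Proof.
  intros Ha HX HY. rewrite !inner_eq; auto using inH_add. unfold Cadd; simpl. f_equal.
  - rewrite <- Series_plus by (apply ex_re; auto). apply Series_ext; intros n.
    unfold ret, sadd, Cadd, Cmul, Cconj. destruct (a n), (Y n), (X n); simpl; ring.
  - rewrite <- Series_plus by (apply ex_im; auto). apply Series_ext; intros n.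
    unfold imt, sadd, Cadd, Cmul, Cconj. destruct (a n), (Y n), (X n); simpl; ring.
Qed.

Lemma inner_scale_r a c X : inH w a -> inH w X ->
  inner w a (sscale c X) = Cmul (Cconj c) (inner w a X).
Proof.
  intros Ha HX. rewrite !inner_eq; auto using inH_scale. destruct c as [c1 c2].
  unfold Cmul, Cconj; simpl. f_equal.
  - transitivity (c1 * Series (ret w a X) + c2 * Series (imt w a X)); [|ring].
    rewrite <- Series_lin by (first [apply ex_re| apply ex_im]; auto).
    apply Series_ext; intros n. unfold ret, imt, sscale, Cmul, Cconj. destruct (a n), (X n); simpl; ring.
  - transitivity (c1 * Series (imt w a X) + (-c2) * Series (ret w a X)); [|ring].
    rewrite <- Series_lin by (first [apply ex_re| apply ex_im]; auto).
    apply Series_ext; intros n. unfold ret, imt, sscale, Cmul, Cconj. destruct (a n), (X n); simpl; ring.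
Qed.

Lemma inner_scale_l c X Y : inH w X -> inH w Y ->
  inner w (sscale c X) Y = Cmul c (inner w X Y).
Proof.
  intros HX HY. rewrite !inner_eq; auto using inH_scale. destruct c as [c1 c2].
  unfold Cmul, Cconj; simpl. f_equal.
  - transitivity (c1 * Series (ret w X Y) + (-c2) * Series (imt w X Y)); [|ring].
    rewrite <- Series_lin by (first [apply ex_re| apply ex_im]; auto).
    apply Series_ext; intros n. unfold ret, imt, sscale, Cmul, Cconj. destruct (X n), (Y n); simpl; ring.
  - transitivity (c1 * Series (imt w X Y) + c2 * Series (ret w X Y)); [|ring].
    rewrite <- Series_lin by (first [apply ex_re| apply ex_im]; auto).
    apply Series_ext; intros n. unfold ret, imt, sscale, Cmul, Cconj. destruct (X n), (Y n); simpl; ring.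
Qed.

Lemma inner_conj X Y : inH w X -> inH w Y -> inner w Y X = Cconj (inner w X Y).
Proof.
  intros HX HY. rewrite !inner_eq; auto. unfold Cconj; simpl. f_equal.
  - apply Series_ext; intros n. unfold ret, Cmul, Cconj. destruct (X n), (Y n); simpl; ring.
  - rewrite <- Series_opp. apply Series_ext; intros n. unfold imt, Cmul, Cconj. destruct (X n), (Y n); simpl; ring.
Qed.

Lemma inner_mono k X : inner w (mono k) X = (w k * fst (X k), - (w k * snd (X k))).
Proof.
  unfold inner. f_equal.
  - rewrite (Rsum_single _ k). unfold mono. rewrite Nat.eqb_refl. unfold Cmul, Cconj, C1.
    destruct (X k); simpl; ring.
    intros n Hn. unfold mono. destruct (Nat.eqb_spec n k); [lia|]. unfold Cmul, C0; simpl; ring.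
  - rewrite (Rsum_single _ k). unfold mono. rewrite Nat.eqb_refl. unfold Cmul, Cconj, C1.
    destruct (X k); simpl; ring.
    intros n Hn. unfold mono. destruct (Nat.eqb_spec n k); [lia|]. unfold Cmul, C0; simpl; ring.
Qed.

Lemma inner_self X : inner w X X = (norm2 w X, 0).
Proof.
  unfold inner, norm2. f_equal.
  - f_equal. apply functional_extensionality; intros n. unfold Cmul, Cconj, Cmod2.
    destruct (X n); simpl; ring.
  - apply Rsum_zero. intros n. unfold Cmul, Cconj. destruct (X n); simpl; ring.
Qed.

Lemma inner_zero_r a : inner w a szero = C0.
Proof.
  unfold inner, C0. f_equal; apply Rsum_zero; intros n; unfold szero, Cmul, Cconj, C0;
  destruct (a n); simpl; ring.
Qed.

End Lin.

Lemma term_le_sum u n N : (forall k, 0 <= u k) -> (n <= N)%nat -> u n <= sum_f_R0 u N.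
Proof.
  intros Hp Hn. induction N as [|N IH].
  - replace n with 0%nat by lia. simpl; lra.
  - simpl. destruct (Nat.eq_dec n (S N)) as [->|Hne].
    + pose proof (cond_pos_sum u N Hp). lra.
    + pose proof (IH ltac:(lia)). pose proof (Hp (S N)). lra.
Qed.

Lemma ratio_bound w : (forall n, 0 < w n) -> Un_cv (fun n => w (S n) / w n) 1 ->
  exists K, 0 < K /\ forall n, w (S n) <= K * w n.
Proof.
  intros wpos H. destruct (H 1 ltac:(lra)) as [N HN].
  set (r := fun n => w (S n) / w n).
  exists (2 + sum_f_R0 (fun k => Rabs (r k)) N). split.
  - pose proof (cond_pos_sum (fun k => Rabs (r k)) N (fun k => Rabs_pos _)). lra.
  - intros n. assert (E : w (S n) = r n * w n) by (unfold r; field; pose proof (wpos n); lra).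
    rewrite E. pose proof (wpos n). apply Rmult_le_compat_r; [lra|].
    pose proof (cond_pos_sum (fun k => Rabs (r k)) N (fun k => Rabs_pos _)).
    destruct (Compare_dec.le_lt_dec n N).
    + pose proof (term_le_sum (fun k => Rabs (r k)) n N (fun k => Rabs_pos _) l). simpl in *.
      pose proof (Rle_abs (r n)). lra.
    + pose proof (HN n ltac:(lia)) as Hr. unfold R_dist in Hr. fold r in Hr.
      apply Rabs_def2 in Hr. unfold r in *. simpl in *. lra.
Qed.

Lemma zpow_coef m f n : zpow m f n = if Nat.ltb n m then C0 else f (n - m)%nat.
Proof.
  revert n. induction m as [|m IH]; intros n.
  - simpl. rewrite Nat.sub_0_r. reflexivity.
  - change (zpow (S m) f n) with (zmul (zpow m f) n). destruct n as [|n]; simpl.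
    + reflexivity.
    + rewrite IH. reflexivity.
Qed.

Lemma zpow_pt (F : Cx -> Cx) (f : series) m : F C0 = C0 ->
  zpow m (fun n => F (f n)) = fun n => F (zpow m f n).
Proof.
  intros H. apply functional_extensionality; intros n. rewrite !zpow_coef.
  destruct (Nat.ltb n m); auto.
Qed.

Lemma zpow_pt2 (F : Cx -> Cx -> Cx) (f g : series) m : F C0 C0 = C0 ->
  zpow m (fun n => F (f n) (g n)) = fun n => F (zpow m f n) (zpow m g n).
Proof.
  intros H. apply functional_extensionality; intros n. rewrite !zpow_coef.
  destruct (Nat.ltb n m); auto.
Qed.

Lemma zpow_scale c f m : zpow m (sscale c f) = sscale c (zpow m f).
Proof. apply (zpow_pt (Cmul c)). unfold Cmul, C0; simpl; f_equal; ring. Qed.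
Lemma zpow_sub f g m : zpow m (ssub f g) = ssub (zpow m f) (zpow m g).
Proof. apply (zpow_pt2 Csub). unfold Csub, C0; simpl; f_equal; ring. Qed.
Lemma zpow_add f g m : zpow m (sadd f g) = sadd (zpow m f) (zpow m g).
Proof. apply (zpow_pt2 Cadd). unfold Cadd, C0; simpl; f_equal; ring. Qed.
Lemma zpow_zero m : zpow m szero = szero.
Proof. apply functional_extensionality; intros n. rewrite zpow_coef. destruct (Nat.ltb n m); auto. Qed.

Section Shift.
Variable w : nat -> R.
Hypothesis wpos : forall n, 0 < w n.
Variable K : R.
Hypothesis Kpos : 0 < K.
Hypothesis HK : forall n, w (S n) <= K * w n.

Lemma zmul_shift f : inH w f -> inH w (zmul f) /\ norm2 w (zmul f) <= K * norm2 w f.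
Proof.
  intros Hf. pose proof Hf as Hf'. apply (inH_ex w) in Hf.
  assert (B : forall k, 0 <= nt w (zmul f) (S k) <= K * nt w f k).
  { intros k. split. apply nt_ge0; auto. unfold nt; simpl.
    pose proof (Cmod2_ge0 (f k)). pose proof (HK k). nra. }
  assert (E : ex_series (fun k => nt w (zmul f) (S k))).
  { apply (@ex_series_le _ R_CompleteNormedModule _ (fun k => K * nt w f k)).
    intros k. change (norm (nt w (zmul f) (S k))) with (Rabs (nt w (zmul f) (S k))).
    rewrite Rabs_pos_eq by apply B. apply B.
    apply (ex_series_scal_l K (nt w f)); auto. }
  assert (H1 : inH w (zmul f)) by (apply inH_ex; auto; apply ex_series_incr_1; auto).
  split; auto. rewrite !norm2_eq; auto.
  rewrite Series_incr_1 by (apply inH_ex; auto).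
  replace (nt w (zmul f) 0) with 0 by (unfold nt, Cmod2; simpl; ring).
  rewrite Rplus_0_l, <- Series_scal_l. apply Series_le; auto.
  apply (ex_series_scal_l K (nt w f)); auto.
Qed.

Lemma zpow_shift m f : inH w f -> inH w (zpow m f) /\ norm2 w (zpow m f) <= K ^ m * norm2 w f.
Proof.
  intros Hf. induction m as [|m IH].
  - simpl. split; auto; lra.
  - destruct IH as [H1 H2]. change (zpow (S m) f) with (zmul (zpow m f)).
    destruct (zmul_shift _ H1) as [H3 H4]. split; auto. simpl.
    pose proof (pow_lt K m Kpos). nra.
Qed.

End Shift.

Lemma small_zero x : (forall e, 0 < e -> Rabs x < e) -> x = 0.
Proof.
  intros H. destruct (Req_dec x 0) as [|Hx]; auto.
  pose proof (H (Rabs x) (Rabs_pos_lt x Hx)). lra.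
Qed.

Lemma least (P : nat -> Prop) : (exists n, P n) -> exists n, P n /\ forall k, (k < n)%nat -> ~ P k.
Proof.
  intros [n Hn]. revert Hn. induction n as [n IH] using (well_founded_induction Wf_nat.lt_wf).
  intros Hn. destruct (classic (exists k, (k < n)%nat /\ P k)) as [[k [Hk Pk]] | N].
  - apply (IH k Hk Pk).
  - exists n; split; auto. intros k Hk Pk; apply N; eauto.
Qed.

Lemma approx_zero w (wpos : forall n, 0 < w n) a X : inH w a -> inH w X ->
  (forall eps, 0 < eps -> exists Y, inH w Y /\ inner w a Y = C0 /\ norm2 w (ssub X Y) < eps) ->
  inner w a X = C0.
Proof.
  intros Ha HX H. pose proof (norm2_ge0 w wpos a Ha) as HA.
  assert (Hs : forall e, 0 < e -> Rabs (fst (inner w a X)) < e /\ Rabs (snd (inner w a X)) < e).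
  { intros e He. set (t := e / (norm2 w a + 1)).
    assert (Ht : 0 < t) by (unfold t; apply Rdiv_lt_0_compat; lra).
    assert (HtA : t * norm2 w a < e).
    { assert (t * (norm2 w a + 1) = e) by (unfold t; field; lra). nra. }
    destruct (H (t * e) ltac:(nra)) as [Y [HY [HaY HN]]].
    pose proof (inner_sub_r w wpos a X Y Ha HX HY) as E. rewrite HaY in E.
    destruct (inner_bound w wpos a (ssub X Y) t Ht Ha (inH_sub w wpos X Y HX HY)) as [B1 B2].
    rewrite E in B1, B2. destruct (inner w a X) as [x1 x2]. unfold Csub, C0 in *; simpl in *.
    rewrite Rminus_0_r in B1, B2.
    assert (norm2 w (ssub X Y) / t < e).
    { apply Rlt_div_l; auto. lra. }
    split; lra. }
  destruct (inner w a X) as [x1 x2] eqn:E. unfold C0. f_equal; apply small_zero; intros e He;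
  apply Hs in He; simpl in He; tauto.
Qed.

Lemma pair_C0 (z : Cx) : fst z = 0 -> snd z = 0 -> z = C0.
Proof. destruct z; simpl; intros; subst; reflexivity. Qed.

Theorem mainTheorem1 (w : nat -> R) (hw : weight w) (f : series)
  (hf : inH w f) (hnf : hnorm w f = 1) :
  is_inner w f <->
  exists M : series -> Prop,
    closed_subspace w M /\ z_invariant M /\ (exists g, M g /\ g <> szero) /\
    exists d : nat,
      (forall k : nat, (k < d)%nat -> in_perp w M (mono k)) /\
      ~ in_perp w M (mono d) /\
      exists (c : Cx) (p : series),
        is_orth_proj w M (mono d) p /\ f = sscale c p.
Proof.
  destruct hw as [w0 [wpos Hr]].
  destruct (ratio_bound w wpos Hr) as [K [Kpos HK]].
  split.
  - intros [_ [_ Hin]].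
    assert (N1 : norm2 w f = 1).
    { unfold hnorm in hnf. pose proof (norm2_ge0 w wpos f hf).
      apply sqrt_inj; auto; [lra|]. rewrite sqrt_1; auto. }
    assert (Ex : exists n, f n <> C0).
    { apply NNPP; intro N. assert (norm2 w f = 0).
      { unfold norm2. apply Rsum_zero. intros n. destruct (classic (f n = C0)) as [E|E].
        rewrite E; unfold Cmod2, C0; simpl; ring. exfalso; apply N; eauto. }
      lra. }
    destruct (least _ Ex) as [d [Hfd0 Hmin]].
    assert (Hfk : forall k, (k < d)%nat -> f k = C0).
    { intros k Hk. apply NNPP. apply Hmin; auto. }
    destruct (f d) as [f1 f2] eqn:Efd.
    set (m2 := f1 * f1 + f2 * f2).
    assert (Hm2 : 0 < m2).
    { unfold m2. destruct (Req_dec f1 0), (Req_dec f2 0).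
      - subst. exfalso; apply Hfd0; reflexivity.
      - nra. - nra. - nra. }
    pose proof (wpos d) as Hwd.
    set (c0 := (w d * f1, - (w d * f2))).
    set (p := sscale c0 f).
    set (q := ssub (mono d) p).
    assert (Hp : inH w p) by (apply inH_scale; auto).
    assert (Hq : inH w q) by (apply inH_sub; auto using inH_mono).
    assert (Hpd : p d = (w d * m2, 0)).
    { unfold p, sscale. rewrite Efd. unfold c0, Cmul, m2; simpl; f_equal; ring. }
    set (M := fun g => inH w g /\ (forall k, (k < d)%nat -> g k = C0) /\
                       forall m, inner w q (zpow m g) = C0).
    assert (HpM : M p).
    { split; [auto|split].
      - intros k Hk. unfold p, sscale. rewrite Hfk by auto. unfold Cmul, C0; simpl; f_equal; ring.
      - intros m. pose proof (proj1 (zpow_shift w wpos K Kpos HK m f hf)) as Hzf.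
        pose proof (proj1 (zpow_shift w wpos K Kpos HK m p Hp)) as Hzp.
        unfold q. rewrite inner_sub_l by (auto using inH_mono, inH_scale).
        rewrite inner_mono. unfold p. rewrite zpow_scale.
        rewrite inner_scale_l, inner_scale_r by (auto using inH_scale).
        destruct m as [|m].
        + simpl. rewrite inner_self, N1. unfold sscale. rewrite Efd.
          unfold c0, Cmul, Cconj, Csub, C0; simpl; f_equal; ring.
        + rewrite (inner_conj w wpos _ _ Hzf hf), Hin by lia.
          unfold sscale. rewrite zpow_coef.
          assert (Hz0 : (if Nat.ltb d (S m) then C0 else f (d - S m)%nat) = C0).
          { destruct (Nat.ltb_spec d (S m)); auto. apply Hfk; lia. }
          rewrite Hz0. unfold c0, Cmul, Cconj, Csub, C0; simpl; f_equal; ring. }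
    exists M. split; [|split; [|split]].
    +
      split; [intros g Hg; apply Hg|split; [|split; [|split]]].
      * split; [apply inH_zero|split]. intros; reflexivity.
        intros m. rewrite zpow_zero. apply inner_zero_r.
      * intros g h [Hg [Hgk Hgm]] [Hh [Hhk Hhm]]. split; [apply inH_add; auto|split].
        -- intros k Hk. unfold sadd. rewrite Hgk, Hhk by auto. unfold Cadd, C0; simpl; f_equal; ring.
        -- intros m. rewrite zpow_add, inner_add_r, Hgm, Hhm; auto.
           unfold Cadd, C0; simpl; f_equal; ring.
           apply (zpow_shift w wpos K Kpos HK m g Hg). apply (zpow_shift w wpos K Kpos HK m h Hh).
      * intros c g [Hg [Hgk Hgm]]. split; [apply inH_scale; auto|split].
        -- intros k Hk. unfold sscale. rewrite Hgk by auto. unfold Cmul, C0; simpl; f_equal; ring.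
        -- intros m. rewrite zpow_scale, inner_scale_r, Hgm; auto.
           unfold Cmul, Cconj, C0; simpl; f_equal; ring.
           apply (zpow_shift w wpos K Kpos HK m g Hg).
      * intros g Hg Happ.
        assert (Happ2 : forall e, 0 < e -> exists h, M h /\ norm2 w (ssub g h) < e).
        { intros e He. destruct (Happ (sqrt e) (sqrt_lt_R0 e He)) as [h [Hh Hn]].
          exists h; split; auto. apply sqrt_lt_0_alt. exact Hn. }
        split; [auto|split].
        -- intros k Hk.
           assert (I : inner w (mono k) g = C0).
           { apply approx_zero; auto using inH_mono. intros e He.
             destruct (Happ2 e He) as [h [[Hh [Hhk _]] Hn]]. exists h; split; auto; split; auto.
             rewrite inner_mono, Hhk by auto. unfold C0; simpl; f_equal; ring. }
           rewrite inner_mono in I. pose proof (wpos k).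
           destruct (g k) as [a b]. unfold C0 in *; simpl in *. injection I; intros.
           f_equal; nra.
        -- intros m. apply approx_zero; auto.
           apply (zpow_shift w wpos K Kpos HK m g Hg).
           intros e He. pose proof (pow_lt K m Kpos) as HKm.
           destruct (Happ2 (e / K ^ m) ltac:(apply Rdiv_lt_0_compat; auto)) as [h [[Hh [_ Hhm]] Hn]].
           exists (zpow m h). split; [apply (zpow_shift w wpos K Kpos HK m h Hh)|split; auto].
           rewrite <- zpow_sub.
           destruct (zpow_shift w wpos K Kpos HK m (ssub g h) (inH_sub w wpos g h Hg Hh)) as [_ B].
           assert (K ^ m * norm2 w (ssub g h) < e).
           { apply Rlt_div_r in Hn; auto. lra. }
           lra.
    +
      intros g [Hg [Hgk Hgm]]. split; [apply (zmul_shift w wpos K HK g Hg)|split].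
      * intros k Hk. destruct k as [|k]; [reflexivity|]. simpl. apply Hgk. lia.
      * intros m. change (zpow m (zmul g)) with (Nat.iter m zmul (zmul g)).
        rewrite <- Nat.iter_succ_r. exact (Hgm (S m)).
    + exists p. split; auto. intros E. assert (p d = szero d) by (rewrite E; reflexivity).
      rewrite Hpd in H. unfold szero, C0 in H. injection H; intros. nra.
    + exists d. split; [|split].
      * intros k Hk. split; [apply inH_mono|]. intros g [_ [Hgk _]].
        rewrite inner_mono, Hgk by auto. unfold C0; simpl; f_equal; ring.
      * intros [_ P]. specialize (P p HpM). rewrite inner_mono, Hpd in P.
        unfold C0 in P; simpl in P. injection P; intros. pose proof (Rmult_lt_0_compat _ _ Hwd (Rmult_lt_0_compat _ _ Hwd Hm2)). lra.
      * exists (f1 / (w d * m2), f2 / (w d * m2)), p. split.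
        -- split; auto. intros g [_ [_ Hgm]]. exact (Hgm 0%nat).
        -- apply functional_extensionality; intros n. unfold p, sscale, c0, Cmul.
           destruct (f n) as [a b]; simpl. unfold m2 in *. f_equal; field; lra.
  - intros [M [[HMH [HM0 [HMadd [HMsc HMcl]]]] [Hz [Hnz [d [Hperp [Hnp [c [p [[HpM Horth] Hfp]]]]]]]]]].
    subst f. split; [auto| split; [auto|]]. intros m Hm.
    pose proof (HMH p HpM) as Hp.
    assert (zM : forall m, M (zpow m p)).
    { induction m0 as [|m0 IH]; [exact HpM|]. change (zpow (S m0) p) with (zmul (zpow m0 p)). apply Hz; auto. }
    pose proof (HMH _ (zM m)) as HX.
    assert (pk : forall k, (k < d)%nat -> p k = C0).
    { intros k Hk. destruct (Hperp k Hk) as [_ P]. specialize (P p HpM).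
      rewrite inner_mono in P. pose proof (wpos k).
      destruct (p k) as [a b]. unfold C0 in *; simpl in *. injection P; intros.
      f_equal; nra. }
    pose proof (Horth _ (zM m)) as O.
    rewrite inner_sub_l in O by (auto using inH_mono).
    rewrite inner_mono in O. rewrite zpow_coef in O.
    assert (Hd : (if Nat.ltb d m then C0 else p (d - m)%nat) = C0).
    { destruct (Nat.ltb_spec d m); auto. apply pk; lia. }
    rewrite Hd in O.
    assert (IpX : inner w p (zpow m p) = C0).
    { destruct (inner w p (zpow m p)) as [z1 z2]. unfold Csub, C0 in O; simpl in O.
      injection O; intros. apply pair_C0; simpl; lra. }
    rewrite zpow_scale, inner_scale_l, inner_scale_r by (auto using inH_scale).
    rewrite (inner_conj w wpos p (zpow m p) Hp HX), IpX.
    unfold Cmul, Cconj, C0; destruct c; simpl; f_equal; ring.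
Qed.
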